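(* Let $\mathcal F|\mathcal G$ be a biflag with biflats indexed $F_1|G_1,\dots,F_k|G_k$ so that $F_1\subseteq\cdots\subseteq F_k$, $G_1\supseteq\cdots\supseteq G_k$, with $G_{k+1}=\emptyset$, and let $l$ be the largest index with $F_l\neq E$ ($l=0$ and $F_0=\emptyset$, $G_0=E$ if there is none). If $c\in E$ and $c\notin F_l$, then in $A_{M,M^\perp}$ \[ x_{\mathcal F|\mathcal G}\,\gamma_c=\sum_{F|G}x_{\mathcal F|\mathcal G\,\cup\,\{F|G\}}, \] the sum over biflats $F|G$ with $F_l\cup\{c\}\subseteq F\subsetneq E$ and $G_l\supseteq G\supseteq G_{l+1}$ (terms for which $\mathcal F|\mathcal G\cup\{F|G\}$ is not a biflag being zero).
   Context: Let $M$ be a matroid with no loops and no coloops on the ground set $E=\{0,1,\dots,n\}$; $M^\perp$ its dual. A biflat of $M$ is a pair $F|G$ where $F$ is a flat of $M$, $G$ is a flat of $M^\perp$, both are nonempty, they are not both equal to $E$, and $F\cup G=E$. Two biflats $F|G$, $F'|G'$ are compatible if ($F\subseteq F'$ and $G\supseteq G'$) or ($F\supseteq F'$ and $G\subseteq G'$). A biflag is a set of pairwise compatible biflats with $\bigcup_{F|G}(F\cap G)\neq E$. Conormal Chow ring: $S$ is the polynomial ring over $\mathbb R$ in variables $x_{F|G}$, one per biflat; $x_{\mathcal F|\mathcal G}=\prod_{F|G\in\mathcal F|\mathcal G}x_{F|G}$ for a set of biflats. For $i\in E$, $\gamma_i=\sum_{i\in F,\,F\neq E}x_{F|G}$, $\bar\gamma_i=\sum_{i\in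 G,\,G\neq E}x_{F|G}$. $I$ is generated by the $x_{\mathcal F|\mathcal G}$ for sets of biflats that are not biflags, $J$ by all $\gamma_i-\gamma_j$, $\bar\gamma_i-\bar\gamma_j$; $A_{M,M^\perp}=S/(I+J)$. *)

(* Defs.v *)
From HB Require Import structures.
From mathcomp Require Import all_boot all_order all_algebra.
From mathcomp Require Import reals.
From mathcomp Require Import mpoly.

Set Implicit Arguments.
Unset Strict Implicit.
Unset Printing Implicit Defensive.

Import GRing.Theory.
Local Open Scope ring_scope.

Record matroid (T : finType) := Matroid {
  mrank : {set T} -> nat;
  mrank_le_card : forall A, (mrank A <= #|A|)%N;
  mrank_mono : forall A B : {set T}, A \subset B -> (mrank A <= mrank B)%N;
  mrank_submod : forall A B : {set T},
    (mrank (A :|: B) + mrank (A :&: B) <= mrank A + mrank B)%N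
}.

Section MatroidDefs.
Variable T : finType.
Variable M : matroid T.

Definition dual_rank (A : {set T}) : nat :=
  (#|A| + mrank M (~: A) - mrank M setT)%N.

Definition is_flat_r (r : {set T} -> nat) (F : {set T}) : bool :=
  [forall x, (x \notin F) ==> (r F < r (x |: F))%N].

Definition is_flat (F : {set T}) : bool := is_flat_r (mrank M) F.
Definition is_dual_flat (G : {set T}) : bool := is_flat_r dual_rank G.

Definition is_loop (x : T) : Prop := mrank M [set x] = 0%N.
(* a coloop of M is a loop of M^perp *)
Definition is_coloop (x : T) : Prop := dual_rank [set x] = 0%N.

Definition loopless_coloopless : Prop :=
  forall x : T, ~ is_loop x /\ ~ is_coloop x.

Definition is_biflat (p : {set T} * {set T}) : bool :=
  [&& is_flat p.1, is_dual_flat p.2, p.1 != set0, p.2 != set0,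
      ~~ ((p.1 == setT) && (p.2 == setT)) & p.1 :|: p.2 == setT].

Definition biflat := {p : {set T} * {set T} | is_biflat p}.

Definition bF (b : biflat) : {set T} := (val b).1.
Definition bG (b : biflat) : {set T} := (val b).2.

Definition compatible (b b' : biflat) : bool :=
  ((bF b \subset bF b') && (bG b' \subset bG b)) ||
  ((bF b' \subset bF b) && (bG b \subset bG b')).

Definition is_biflag (S : {set biflat}) : bool :=
  [forall b in S, forall b' in S, compatible b b'] &&
  ((\bigcup_(b in S) (bF b :&: bG b)) != setT).

(* F_l, G_l, G_{l+1} for a biflag S (which is a chain F_1 ⊆ ... ⊆ F_k,
   G_1 ⊇ ... ⊇ G_k).  l is the largest index with F_l != E:
   F_l = largest F_i != E  (= union of those, or ∅ if none),
   G_l = corresponding G   (= intersection of those G_i, or E if none),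
   G_{l+1} = G of the next biflat, whose F is E (= union of the G_i with
   F_i = E, or ∅ if none). *)
Definition Fl (S : {set biflat}) : {set T} :=
  \bigcup_(b in S | bF b != setT) bF b.
Definition Gl (S : {set biflat}) : {set T} :=
  \bigcap_(b in S | bF b != setT) bG b.
Definition Gl1 (S : {set biflat}) : {set T} :=
  \bigcup_(b in S | bF b == setT) bG b.

Variable R : realType.

Definition nvars := #|{: biflat}|.
Definition Spoly := {mpoly R[nvars]}.

Definition xvar (b : biflat) : Spoly := 'X_(enum_rank b).

Definition xmon (S : {set biflat}) : Spoly := \prod_(b in S) xvar b.

Definition gam (i : T) : Spoly :=
  \sum_(b : biflat | (i \in bF b) && (bF b != setT)) xvar b.
Definition gambar (i : T) : Spoly :=
  \sum_(b : biflat | (i \in bG b) && (bG b != setT)) xvar b.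

Definition IJ_gen (g : Spoly) : Prop :=
  (exists S : {set biflat}, ~~ is_biflag S /\ g = xmon S) \/
  (exists i j : T, g = gam i - gam j) \/
  (exists i j : T, g = gambar i - gambar j).

Definition in_ideal (gen : Spoly -> Prop) (p : Spoly) : Prop :=
  exists s : seq (Spoly * Spoly),
    (forall q, q \in s -> gen q.2) /\ p = \sum_(q <- s) q.1 * q.2.

Definition eq_in_A (p q : Spoly) : Prop := in_ideal IJ_gen (p - q).

End MatroidDefs.

(* Main.v *)
Require Import Defs.
From HB Require Import structures.
From mathcomp Require Import all_boot all_order all_algebra.
From mathcomp Require Import reals.
From mathcomp Require Import mpoly.
Local Open Scope ring_scope.
Import GRing.Theory.


Section Aux.
Variable R : comRingType.
Variable gen : R -> Prop.

Definition inI (p : R) := exists s : seq (R * R),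
    (forall q, q \in s -> gen q.2) /\ p = \sum_(q <- s) q.1 * q.2.

Lemma inI0 : inI 0.
Proof. exists [::]; split => //; by rewrite big_nil. Qed.

Lemma inID p q : inI p -> inI q -> inI (p + q).
Proof.
move=> [s1 [H1 ->]] [s2 [H2 ->]]; exists (s1 ++ s2); split.
  by move=> x; rewrite mem_cat => /orP [/H1|/H2].
by rewrite big_cat.
Qed.

Lemma inIgen g : gen g -> inI g.
Proof.
move=> Hg; exists [:: (1, g)]; split.
  by move=> x; rewrite inE => /eqP ->.
by rewrite big_seq1 mul1r.
Qed.

Lemma inIsum (I : finType) (P : pred I) (F : I -> R) :
  (forall i, P i -> inI (F i)) -> inI (\sum_(i | P i) F i).
Proof.
move=> H; apply: (big_ind inI) => //; [exact: inI0 | exact: inID].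
Qed.
End Aux.

Theorem mainTheorem9 (n : nat) (M : matroid 'I_n.+1) (R : realType)
  (HM : loopless_coloopless M)
  (S : {set biflat M}) (HS : is_biflag S)
  (c : 'I_n.+1) (Hc : c \notin Fl S) :
  @eq_in_A _ M R (@xmon _ M R S * @gam _ M R c)
    (\sum_(b : biflat M | [&& c |: Fl S \subset bF b, bF b != setT,
                              bG b \subset Gl S & Gl1 S \subset bG b])
        @xmon _ M R (b |: S)).
Proof.
set P := fun b : biflat M => (c \in bF b) && (bF b != setT).
set Q := fun b : biflat M => [&& c |: Fl S \subset bF b, bF b != setT,
                              bG b \subset Gl S & Gl1 S \subset bG b].
have QP : forall b, Q b -> P b.
  move=> b /and4P [H1 H2 _ _]; rewrite /P H2 andbT.
  by move: H1; rewrite subUset sub1set => /andP [].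
have PnS : forall b, P b -> b \notin S.
  move=> b /andP [cb Fb]; apply/negP => bS; move: Hc; apply/negP/negPn.
  apply: (subsetP (bigcup_sup b _)) => //; by rewrite bS.
have key : forall b, P b -> is_biflag (b |: S) -> Q b.
  move=> b Pb /andP [/forall_inP Hc' _].
  have comp : forall s, s \in S -> compatible b s.
    move=> s sS; have := Hc' b (setU11 _ _) => /forall_inP; apply.
    by rewrite setU1r.
  move: Pb => /andP [cb Fb].
  have A1 : forall s, s \in S -> bF s != setT ->
      (bF s \subset bF b) && (bG b \subset bG s).
    move=> s sS Fs; move: (comp s sS); rewrite /compatible => /orP [/andP [H _]|//].
    exfalso; move: Hc; apply/negP/negPn.
    apply: (subsetP (bigcup_sup s _)); first by rewrite sS.
    exact: (subsetP H).
  have A2 : forall s, s \in S -> bF s = setT -> bG s \subset bG b.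
    move=> s sS Fs; move: (comp s sS); rewrite /compatible => /orP [/andP [_ H]//|/andP [H _]].
    by move: Fb; rewrite Fs in H; rewrite eqEsubset subsetT H.
  apply/and4P; split => //.
  - rewrite subUset sub1set cb /=; apply/bigcupsP => s /andP [sS Fs].
    by case/andP: (A1 s sS Fs).
  - apply/bigcapsP => s /andP [sS Fs]; by case/andP: (A1 s sS Fs).
  - apply/bigcupsP => s /andP [sS /eqP Fs]; exact: A2.
have LHS : @xmon _ M R S * @gam _ M R c = \sum_(b | P b) @xmon _ M R (b |: S).
  rewrite /gam mulr_sumr; apply: eq_bigr => b Pb.
  by rewrite /xmon big_setU1 ?PnS //= mulrC.
rewrite /eq_in_A LHS (bigID Q) /=.
have -> : \sum_(i | P i && Q i) @xmon _ M R (i |: S) = \sum_(i | Q i) @xmon _ M R (i |: S).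
  apply: eq_bigl => b; case Qb: (Q b); last by rewrite andbF.
  by rewrite (QP _ Qb).
rewrite [X in X - _]addrC addrK.
have := @inIsum _ (@IJ_gen _ M R) _ (fun b => P b && ~~ Q b) (fun b => @xmon _ M R (b |: S)).
apply => b /andP [Pb nQb]; apply: inIgen; left; exists (b |: S); split => //.
by apply/negP => /(key _ Pb); rewrite (negbTE nQb).
Qed.
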